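(* Let $\Delta$ be a finite set with $|\Delta|\ge2$, $\ell\ge2$, $\Omega=\Delta^\ell$, $W=\mathrm{Sym}\,\Delta\wr S_\ell$ in product action on $\Omega$, $G\le W$, and let $M$ be a minimal normal subgroup of $G$ transitive on $\Omega$, $M=T_1\times\cdots\times T_k$ with the $T_i$ isomorphic finite simple groups. Let $\Gamma$ be a connected graph with vertex set $\Omega$ with $G\le\mathrm{Aut}\,\Gamma$. Assume $\Gamma$ is $M$-arc-transitive, that $G\pi$ is transitive on $\{1,\dots,\ell\}$, and that $G\le G^{(1)}\wr(G\pi)$. Let $\alpha=(\alpha_1,\dots,\alpha_1)\in\Omega$, $\beta=(\beta_1,\dots,\beta_\ell)\in\Gamma(\alpha)$, and $K=G^{(1)}$. Then there is $h\in(K_{\alpha_1})^\ell$ with $\beta h=(\beta_1,\dots,\beta_1)$. Thus in the image graph $\Gamma h$ the tuples $(\alpha_1,\dots,\alpha_1)$ and $(\beta_1,\dots,\beta_1)$ are adjacent. Furthermore $G^h\le\mathrm{Aut}(\Gamma h)$ and $G^h\le G^{(1)}\wr(G\pi)$.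
   Context: Product action: $(\delta_1,\dots,\delta_\ell)^{(g_1,\dots,g_\ell)h}=(\delta_{1h^{-1}}g_{1h^{-1}},\dots,\delta_{\ell h^{-1}}g_{\ell h^{-1}})$. $\pi:W\to S_\ell$ is the natural projection. For $j$, $W_j$ is the stabiliser of $j$ under $\pi$, $W_j=\mathrm{Sym}\,\Delta\times(\mathrm{Sym}\,\Delta\wr S_{\ell-1})$ with the first factor on the $j$-th coordinate, and the component $G^{(j)}\le\mathrm{Sym}\,\Delta$ is the projection of $G\cap W_j$ onto the first factor. $G^{(1)}\wr(G\pi)$ denotes the subgroup $(G^{(1)})^\ell\rtimes G\pi$ of $W$. $K_{\alpha_1}$ is the stabiliser of $\alpha_1$ in $K$; $(K_{\alpha_1})^\ell\le(\mathrm{Sym}\,\Delta)^\ell$ acts coordinatewise. $\Gamma h$ is the graph on $\Omega$ whose edges are $\{xh,yh\}$ for edges $\{x,y\}$ of $\Gamma$. $\Gamma$ is $M$-arc-transitive if $M$ is transitive on ordered pairs of adjacent vertices; $\Gamma(\alpha)$ is the neighbourhood of $\alpha$. *)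

(* Defs.v *)
From HB Require Import structures.
From mathcomp Require Import all_boot all_fingroup all_solvable.
Set Implicit Arguments. Unset Strict Implicit. Unset Printing Implicit Defensive.

(* Omega = Delta^l, tuples indexed by 'I_l.  Permutations compose as right
   actions in MathComp: (s * t) x = t (s x), matching the paper. *)
Notation Omega D l := {ffun 'I_l -> D}.

Local Open Scope group_scope.
Section Wreath.
Variables (D : finType) (l : nat).

Definition prod_act (g : {ffun 'I_l -> {perm D}}) (h : {perm 'I_l})
  (d : Omega D l) : Omega D l :=
  [ffun i => g (h^-1 i) (d (h^-1 i))].

Lemma prod_act_inj g h : injective (prod_act g h).
Proof.
move=> x y /ffunP E; apply/ffunP => j; have := E (h j).
by rewrite !ffunE permK => /perm_inj.
Qed.

Definition wr_perm g h : {perm Omega D l} := perm (@prod_act_inj g h).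

Definition W : {set {perm Omega D l}} :=
  [set wr_perm gh.1 gh.2 | gh in [set: {ffun 'I_l -> {perm D}} * {perm 'I_l}]].

(* natural projection pi : W -> S_l (well defined on W when #|D| >= 2) *)
Definition piW (p : {perm Omega D l}) : {perm 'I_l} :=
  odflt 1 [pick h : {perm 'I_l} | [exists g, p == wr_perm g h]].

(* component G^(j): projection onto the j-th factor of G \cap W_j *)
Definition component (G : {set {perm Omega D l}}) (j : 'I_l) : {set {perm D}} :=
  [set x : {perm D} | [exists p in G, exists g, exists h,
     [&& p == wr_perm g h, h j == j & g j == x]]].

Definition wrS (K : {set {perm D}}) (H : {set {perm 'I_l}}) :
  {set {perm Omega D l}} :=
  [set wr_perm gh.1 gh.2 | gh in [set gh : {ffun 'I_l -> {perm D}} * {perm 'I_l}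
     | [forall i, gh.1 i \in K] && (gh.2 \in H)]].

End Wreath.
Arguments piW {D l} p.
Arguments component {D l} G j.
Arguments wrS {D l} K H.
Arguments wr_perm {D l} g h.
Arguments W D l : clear implicits.

Definition ord_first (l : nat) (h : 0 < l) : 'I_l := Ordinal h.

Section Graphs.
Variable V : finType.
Definition simple_graph (E : rel V) := symmetric E /\ irreflexive E.
Definition connected (E : rel V) := forall x y, connect E x y.
Definition autG (E : rel V) : {set {perm V}} :=
  [set p : {perm V} | [forall x, forall y, E (p x) (p y) == E x y]].
Definition arc_transitive (M : {set {perm V}}) (E : rel V) :=
  forall x y x' y', E x y -> E x' y' -> exists2 m, m \in M & m x = x' /\ m y = y'.
Definition image_graph (E : rel V) (h : {perm V}) : rel V :=
  fun x y => [exists u, exists v, [&& E u v, x == h u & y == h v]].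
End Graphs.

(* Main.v *)
Require Import Defs.
From mathcomp Require Import all_boot all_fingroup all_solvable.
Set Implicit Arguments. Unset Strict Implicit. Unset Printing Implicit Defensive.
Local Open Scope group_scope.
Lemma sum_bound p n m : 1 < p ->
  \sum_(1 <= k < m.+1) n %/ p ^ k + n %/ p ^ m <= n.
Proof.
move=> p1; elim: m => [|m IH]; first by rewrite big_geq // expn0 divn1.
rewrite big_nat_recr //= -addnA; apply: leq_trans IH; rewrite leq_add2l.
rewrite expnSr divnMA addnn -muln2; apply: leq_trans (leq_divM _ p).
by rewrite leq_mul2l p1 orbT.
Qed.

Lemma logn_fact_lt p n : prime p -> 0 < n -> logn p n`! < n.
Proof.
move=> pp n0; have p1 := prime_gt1 pp; rewrite logn_fact //.
set K := trunc_log p n.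
have pK : p ^ K <= n by apply: trunc_logP.
have nK : n < p ^ K.+1 by apply: trunc_log_ltn.
have Kn : K <= n by apply: leq_trans pK; apply/ltnW/ltn_expl.
rewrite (big_cat_nat (n := K.+1)) //= ?ltnS //.
have -> : \sum_(K.+1 <= i < n.+1) n %/ p ^ i = 0.
  rewrite big_nat_cond big1 // => k /andP[/andP[Kk _] _].
  apply: divn_small; apply: leq_trans nK _.
  by rewrite leq_pexp2l // ltnW.
rewrite addn0.
have := @sum_bound p n K p1 : _ <= n; have : 0 < n %/ p ^ K by rewrite divn_gt0 ?expn_gt0 ?(ltnW p1).
move=> h1 h2; apply: leq_trans h2; rewrite -[X in X < _]addn0 ltn_add2l //.
Qed.

Section WP.
Variables (D : finType) (l : nat).
Implicit Types (g f : {ffun 'I_l -> {perm D}}) (h : {perm 'I_l}) (d : Omega D l).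

Lemma wrE g h d i : wr_perm g h d i = g (h^-1 i) (d (h^-1 i)).
Proof. by rewrite /wr_perm permE /prod_act ffunE. Qed.

Lemma wrE' g h d j : wr_perm g h d (h j) = g j (d j).
Proof. by rewrite wrE permK. Qed.

Lemma wr_mul g h g' h' :
  wr_perm g h * wr_perm g' h' = wr_perm [ffun j => g j * g' (h j)] (h * h').
Proof.
apply/permP => d; apply/ffunP => i; rewrite permM.
have -> : i = (h * h') ((h * h')^-1 i) by rewrite permKV.
rewrite wrE' ffunE permM; set j := (h * h')^-1 i.
by rewrite wrE' wrE' permM.
Qed.

Lemma wr1 : wr_perm [ffun _ => 1] (1 : {perm 'I_l}) = 1 :> {perm Omega D l}.
Proof.
apply/permP => d; apply/ffunP => i; by rewrite wrE !ffunE invg1 !perm1.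
Qed.

Lemma wr_inv g h :
  (wr_perm g h)^-1 = wr_perm [ffun j => (g (h^-1 j))^-1] h^-1.
Proof.
apply/eqP; rewrite eq_invg_mul wr_mul mulgV -wr1; apply/eqP; congr wr_perm.
by apply/ffunP => j; rewrite !ffunE permK mulgV.
Qed.

Lemma other_elt (x : D) : 2 <= #|D| -> exists y : D, y != x.
Proof.
move=> hD; case: (pickP (predC1 x)) => [y Hy|H]; first by exists y.
have := eq_card0 H; rewrite cardC1 => E.
by move: hD E; case: #|D| => [|[|n]].
Qed.

Lemma wr_inj (hD : 2 <= #|D|) g h g' h' :
  wr_perm g h = wr_perm g' h' -> g = g' /\ h = h'.
Proof.
move=> E.
have [x _] : exists x : D, x \in D by apply/card_gt0P; exact: leq_trans hD.
have [y yx] := other_elt x hD.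
have Hh : forall i, h^-1 i = h'^-1 i.
  move=> i; apply/eqP/negPn/negP => ne.
  pose d1 : Omega D l := [ffun t => x].
  pose d2 : Omega D l := [ffun t => if t == h^-1 i then y else x].
  have e1 := congr1 (fun p : {perm Omega D l} => p d1 i) E.
  have e2 := congr1 (fun p : {perm Omega D l} => p d2 i) E.
  move: e1 e2; rewrite /= !wrE !ffunE eqxx eq_sym (negbTE ne).
  move=> e1 e2; move: e2; rewrite -e1 => /perm_inj; exact/eqP.
have hh : h = h'.
  by apply: invg_inj; apply/permP => i; rewrite Hh.
subst h'; split => //; apply/ffunP => j; apply/permP => z.
have := congr1 (fun p : {perm Omega D l} => p [ffun=> z] (h j)) E.
by rewrite /= !wrE' !ffunE.
Qed.

Lemma memW g h : wr_perm g h \in W D l.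
Proof. by apply/imsetP; exists (g, h); rewrite ?inE. Qed.

Lemma W_rep p : p \in W D l -> exists g h, p = wr_perm g h.
Proof. by case/imsetP => [[g h]] _ ->; exists g, h. Qed.

Lemma piW_wr (hD : 2 <= #|D|) g h : piW (wr_perm g h) = h.
Proof.
rewrite /piW; case: pickP => [h' /existsP[g' /eqP E] | H] /=.
  by case: (wr_inj hD E).
by have := H h; rewrite /= => /existsP[]; exists g.
Qed.

Lemma W_rep' (hD : 2 <= #|D|) p : p \in W D l -> exists g, p = wr_perm g (piW p).
Proof. by case/W_rep => g [h ->]; exists g; rewrite piW_wr. Qed.

Lemma W_group : group_set (W D l).
Proof.
apply/group_setP; split; first by rewrite -wr1 memW.
by move=> x y /W_rep[g [h ->]] /W_rep[g' [h' ->]]; rewrite wr_mul memW.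
Qed.

Canonical Wg := Group W_group.

Lemma piW_morphM (hD : 2 <= #|D|) : {in Wg &, {morph piW : x y / x * y}}.
Proof.
by move=> x y /W_rep[g [h ->]] /W_rep[g' [h' ->]]; rewrite wr_mul !piW_wr.
Qed.
End WP.
Section Comp.
Variables (D : finType) (l : nat).

Lemma compM (G : {group {perm Omega D l}}) j a b :
  a \in component G j -> b \in component G j -> a * b \in component G j.
Proof.
rewrite !inE => /exists_inP[p pG /existsP[ga /existsP[ha /and3P[/eqP pE hj /eqP ga_j]]]].
move=> /exists_inP[q qG /existsP[gb /existsP[hb /and3P[/eqP qE hj' /eqP gb_j]]]].
apply/exists_inP; exists (p * q); first exact: groupM.
apply/existsP; exists [ffun k => ga k * gb (ha k)]; apply/existsP; exists (ha * hb).
rewrite pE qE wr_mul eqxx /= permM (eqP hj) hj' /= ffunE (eqP hj) ga_j gb_j.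
by rewrite eqxx.
Qed.

Lemma compV (G : {group {perm Omega D l}}) j a :
  a \in component G j -> a^-1 \in component G j.
Proof.
rewrite !inE => /exists_inP[p pG /existsP[ga /existsP[ha /and3P[/eqP pE /eqP hj /eqP ga_j]]]].
apply/exists_inP; exists p^-1; first by rewrite groupV.
have hj' : ha^-1 j = j by rewrite -{1}hj permK.
apply/existsP; exists [ffun k => (ga (ha^-1 k))^-1]; apply/existsP; exists ha^-1.
by rewrite pE wr_inv eqxx /= hj' eqxx ffunE hj' ga_j eqxx.
Qed.
End Comp.

Lemma img_graphE (V : finType) (E : rel V) (h : {perm V}) u v :
  image_graph E h u v = E (h^-1 u) (h^-1 v).
Proof.
apply/existsP/idP => [[u' /existsP[v' /and3P[e /eqP -> /eqP ->]]]|e].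
  by rewrite !permK.
by exists (h^-1 u); apply/existsP; exists (h^-1 v); rewrite e !permKV !eqxx.
Qed.

Theorem lemma3p3 (D : finType) (l : nat) (hD : 2 <= #|D|) (hl : 1 < l)
  (G M : {group {perm Omega D l}}) (E : rel (Omega D l))
  (alpha1 : D) (beta : Omega D l) :
  G \subset W D l ->
  (M <| G)%g -> minnormal M G ->
  [transitive M, on [set: Omega D l] | 'P] ->
  (exists k (Ts : 'I_k -> {group {perm Omega D l}}),
     \big[dprod/1%g]_(i < k) Ts i = M /\
     (forall i, simple (Ts i)) /\ (forall i j, Ts i \isog Ts j)) ->
  simple_graph E -> connected E -> G \subset autG E ->
  arc_transitive M E ->
  [transitive piW @: G, on [set: 'I_l] | 'P] ->
  G \subset wrS (component G (ord_first (ltnW hl))) (piW @: G) ->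
  E [ffun=> alpha1] beta ->
  let K := component G (ord_first (ltnW hl)) in
  exists2 g : {ffun 'I_l -> {perm D}},
    (forall i, g i \in K /\ g i alpha1 = alpha1) &
    let h := wr_perm g 1%g in
    [/\ h beta = [ffun=> beta (ord_first (ltnW hl))],
        image_graph E h [ffun=> alpha1] [ffun=> beta (ord_first (ltnW hl))],
        (G :^ h)%g \subset autG (image_graph E h) &
        (G :^ h)%g \subset wrS K (piW @: G)].
Proof.
move=> sGW nMG minM trM _ _ _ GA arcT trPi GwrS Eab K.
set o := ord_first (ltnW hl); set alpha : Omega D l := [ffun=> alpha1].
have sMG : M \subset G by case/andP: nMG.
have sMW : M \subset Wg D l := subset_trans sMG sGW.
pose f := Morphism (@piW_morphM D l hD).
have Mker : M \subset 'ker f.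
  have [_ minN] := mingroupP minM.
  case: (eqVneq (M :&: 'ker f)%G 1%G) => [N1|N1]; last first.
    rewrite -(minN (M :&: 'ker f)%G) ?subsetIr //= ?subsetIl //.
    rewrite N1 /=; apply: normsI; first exact: normal_norm.
    exact: subset_trans sGW (ker_norm f).
  exfalso.
  have cM : #|f @* M| = #|M|.
    rewrite card_morphim (setIidPr sMW) -indexgI.
    by move/(congr1 val): N1 => /= ->; rewrite indexg1.
  have d1 : #|M| %| l`!.
    by rewrite -cM -card_Sn -cardsT cardSg // subsetT.
  have d2 : (#|D| ^ l %| #|M|)%N.
    have := atransP trM; move/(_ alpha (in_setT _)) => eO.
    have cO : #|orbit 'P M alpha| = (#|D| ^ l)%N by rewrite eO cardsT card_ffun card_ord.
    rewrite -cO card_orbit; exact: dvdn_indexg.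
  have pp := pdiv_prime hD.
  have : (pdiv #|D| ^ l %| l`!)%N.
    by apply: dvdn_trans d1; apply: dvdn_trans d2; rewrite dvdn_exp2r // pdiv_dvd.
  rewrite pfactor_dvdn ?fact_gt0 //.
  by rewrite leqNgt logn_fact_lt // ltnW.
have Mpi : forall m, m \in M -> exists c, m = wr_perm c 1.
  move=> m mM; have mW : m \in W D l by apply: (subsetP sMW).
  have [c ->] := W_rep' hD mW; exists c; congr wr_perm.
  exact: (mker (subsetP Mker m mM)).
have Gcomp : forall x g h, x \in G -> x = wr_perm g h ->
    (forall i, g i \in K) /\ h \in piW @: G.
  move=> x g h xG xE; have := subsetP GwrS x xG.
  case/imsetP => [[g' h']]; rewrite inE => /andP[/forallP /= Kg' Hh'] /=.
  rewrite xE => /(wr_inj hD) [-> ->]; by split.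
have claim : forall i, exists fi, [&& fi \in K, fi alpha1 == alpha1 & fi (beta i) == beta o].
  have trPi' : [transitive f @* G, on [set: 'I_l] | 'P] by rewrite morphimEsub.
  move=> i; have [a aG ai] := atransP2 trPi' (in_setT i) (in_setT o).
  have {}aG : a \in piW @: G by move: aG; rewrite /= morphimEsub.
  rewrite /= apermE in ai.
  case/imsetP: aG => x xG ax.
  have xW : x \in W D l by apply: (subsetP sGW).
  have [g0 xE] := W_rep' hD xW; rewrite -ax in xE.
  have Ex : E (x alpha) (x beta).
    by have := subsetP GA x xG; rewrite inE => /forallP/(_ alpha)/forallP/(_ beta)/eqP ->.
  have [m mM [m1 m2]] := arcT _ _ _ _ Ex Eab.
  have [c mE] := Mpi m mM.
  have yG : x * m \in G by rewrite groupM // (subsetP sMG).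
  have yE : x * m = wr_perm [ffun j => g0 j * c (a j)] a by rewrite xE mE wr_mul mulg1.
  have [Kg _] := Gcomp _ _ _ yG yE.
  exists ([ffun j => g0 j * c (a j)] i); rewrite Kg /=.
  have e1 := congr1 (fun d : Omega D l => d (a i)) m1.
  have e2 := congr1 (fun d : Omega D l => d (a i)) m2.
  move: e1 e2; rewrite /= -!permM yE !wrE' -ai !ffunE => -> ->.
  by rewrite !eqxx.
pose P i (fi : {perm D}) := [&& fi \in K, fi alpha1 == alpha1 & fi (beta i) == beta o].
pose g : {ffun 'I_l -> {perm D}} := [ffun i => odflt 1 [pick fi | P i fi]].
have gP : forall i, P i (g i).
  move=> i; rewrite ffunE; case: pickP => [fi //|H].
  by have [fi] := claim i; rewrite -/(P i fi) H.
clearbody g.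
have KV : forall a, a \in K -> a^-1 \in K by move=> a; apply: compV.
have KM : forall a b, a \in K -> b \in K -> a * b \in K by move=> a b; apply: compM.
exists g => [i|]; first by have /and3P[? /eqP ? _] := gP i.
move=> h.
have hb : h beta = [ffun=> beta o].
  apply/ffunP => i; rewrite /h wrE !ffunE invg1 perm1.
  by have /and3P[_ _ /eqP] := gP i.
have ha : h alpha = alpha.
  apply/ffunP => i; rewrite /h wrE !ffunE invg1 perm1.
  by have /and3P[_ /eqP ? _] := gP i.

split => //.
- apply/existsP; exists alpha; apply/existsP; exists beta.
  by rewrite Eab -/alpha ha hb !eqxx.
- apply/subsetP => z; rewrite mem_conjg => xG; set x := z ^ h^-1 in xG.
  have zE : z = x ^ h by rewrite /x -conjgM mulVg conjg1.
  clearbody x; subst z.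
  rewrite inE; apply/forallP => u; apply/forallP => v.
  rewrite !img_graphE !conjgE !permM !permK.
  have := subsetP GA x xG; rewrite inE => /forallP/(_ (h^-1 u))/forallP/(_ (h^-1 v)).
  by [].
- apply/subsetP => z; rewrite mem_conjg => xG; set x := z ^ h^-1 in xG.
  have zE : z = x ^ h by rewrite /x -conjgM mulVg conjg1.
  clearbody x; subst z.
  have xW : x \in W D l by apply: (subsetP sGW).
  have [fx xE] := W_rep' hD xW.
  have [Kfx sP] := Gcomp _ _ _ xG xE.
  rewrite conjgE xE /h wr_inv !wr_mul.
  rewrite invg1 mul1g mulg1.
  apply/imsetP; exists ([ffun j => [ffun j0 => (g ((1 : {perm 'I_l}) j0))^-1] j * [ffun j0 => fx j0 * g (piW x j0)] ((1 : {perm 'I_l}) j)], piW x) => //.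
  rewrite inE /= sP andbT; apply/forallP => i; rewrite !ffunE /=.
  rewrite ?perm1.
  have gK : forall j, g j \in K by move=> j; case/and3P: (gP j).
  by apply: (KM); [apply: (KV) | apply: (KM)].
Qed.
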